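(* Let $a,b,u,v$ be integers with $b>a\ge2$ and $u,v\ge2$, and set $X:=ab-a-b$. Suppose that (1) $a$, $b$ and $uv-1$ are pairwise coprime; (2) $\frac{1}{a}+\frac{1}{b}+\frac{v}{uv-1}>1$; (3) $vab-1=(uv-1)X$. If $u=2$ then $2\le a\le5$, and if $u=3$ then $a\in\{2,3\}$. *)

(* Defs.v *)
From mathcomp Require Import all_boot all_order all_algebra.
Set Implicit Arguments. Unset Strict Implicit. Unset Printing Implicit Defensive.

(* Main.v *)
Require Import Defs.
From mathcomp Require Import all_boot all_order all_algebra.
From mathcomp Require Import ring lra zify.
Import Order.TTheory GRing.Theory Num.Theory.
Local Open Scope ring_scope.

Theorem lemma3p5 (a b u v : int)
  (ha : 2 <= a) (hab : a < b) (hu : 2 <= u) (hv : 2 <= v)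
  (hcop_ab : coprimez a b)
  (hcop_a : coprimez a (u * v - 1))
  (hcop_b : coprimez b (u * v - 1))
  (hineq : 1 < (a%:~R : rat)^-1 + (b%:~R : rat)^-1
               + (v%:~R : rat) / ((u * v - 1)%:~R : rat))
  (heq : v * a * b - 1 = (u * v - 1) * (a * b - a - b)) :
  (u = 2 -> 2 <= a <= 5) /\ (u = 3 -> a = 2 \/ a = 3).
Proof.
set A : rat := a%:~R. set B : rat := b%:~R. set V : rat := v%:~R.
set U : rat := u%:~R.
have eW : ((u * v - 1)%:~R : rat) = U * V - 1 by rewrite /U /V rmorphB rmorphM /=.
rewrite eW in hineq.
have hA : 2 <= A by rewrite /A (ler_int rat 2 a).
have hB : A + 1 <= B by rewrite /A /B -(rmorphD _ a 1) ler_int; lia.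
have hV : 2 <= V by rewrite /V (ler_int rat 2 v).
have hU : 2 <= U by rewrite /U (ler_int rat 2 u).
have hW : 0 < U * V - 1 by nra.
have key : A * B * (U * V - 1) < B * (U * V - 1) + A * (U * V - 1) + V * A * B.
  have := hineq; rewrite -(ltr_pM2r (_ : 0 < A * B * (U * V - 1))); last first.
    by apply: mulr_gt0 => //; apply: mulr_gt0; lra.
  rewrite mul1r => h; apply: (lt_le_trans h); rewrite le_eqVlt; apply/orP; left.
  apply/eqP; field; rewrite -/A -/B -/U -/V; apply/and3P; split; apply/negP => /eqP; lra.
split.
  move=> u2; have U2 : U = 2 by rewrite /U u2.
  rewrite ha /=; rewrite leNgt; apply/negP => a6.
  have : 6 <= A by rewrite /A (ler_int rat 6 a); lia.
  move=> hA6; rewrite U2 in key.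
  have h1 : 0 <= B * ((A - 6) * (V - 1)) by apply: mulr_ge0; [lra|apply: mulr_ge0; lra].
  have h2 : 0 <= B * (V - 2) by apply: mulr_ge0; lra.
  have h3 : 0 < (B - A) * (2 * V - 1) by apply: mulr_gt0; lra.
  rewrite -subr_lt0 in key.
  have E : A*B*(2*V-1) - (B*(2*V-1) + A*(2*V-1) + V*A*B) = B*((A-6)*(V-1)) + 2*(B*(V-2)) + (B-A)*(2*V-1) by ring.
  rewrite E in key; move: key h1 h2 h3.
  move: (B*((A-6)*(V-1))) (B*(V-2)) ((B-A)*(2*V-1)) => x y z; lra.
move=> u3; have U3 : U = 3 by rewrite /U u3.
have : ~ (4 <= A).
  move=> hA4; rewrite U3 in key.
  have h1 : 0 <= B * ((A - 4) * (2 * V - 1)) by apply: mulr_ge0; [lra|apply: mulr_ge0; lra].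
  have h2 : 0 <= B * (V - 1) by apply: mulr_ge0; lra.
  have h3 : 0 < (B - A) * (3 * V - 1) by apply: mulr_gt0; lra.
  rewrite -subr_lt0 in key.
  have E : A*B*(3*V-1) - (B*(3*V-1) + A*(3*V-1) + V*A*B) = B*((A-4)*(2*V-1)) + 2*(B*(V-1)) + (B-A)*(3*V-1) by ring.
  rewrite E in key; move: key h1 h2 h3.
  move: (B*((A-4)*(2*V-1))) (B*(V-1)) ((B-A)*(3*V-1)) => x y z; lra.
rewrite /A (ler_int rat 4 a) => h; lia.
Qed.
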